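(* In the ef-MCA model of the context with a two-parameter exponential family distribution $p(y;\vec{\eta})$ whose sufficient statistics satisfy $T_1(y)=y$, the condition on $W_{dh}$ (for the derivative of the lower bound $\mathcal{F}(q,\Theta)$ with respect to $W_{dh}$ and $V_{dh}$ to vanish, together with the corresponding condition $V_{dh}=\sum_n\langle\mathcal{A}_{dh}\rangle_{q^{(n)}}T_2(y_d^{(n)})/\sum_n\langle\mathcal{A}_{dh}\rangle_{q^{(n)}}$) is $$W_{dh}=\frac{\sum_{n=1}^N\langle\mathcal{A}_{dh}(\vec{s},\Theta)\rangle_{q^{(n)}}\,y_d^{(n)}}{\sum_{n=1}^N\langle\mathcal{A}_{dh}(\vec{s},\Theta)\rangle_{q^{(n)}}}.$$
   Context: Exponential family: $p(y;\vec{\eta})=h(y)\exp(\vec{\eta}^T\vec{T}(y)-A(\vec{\eta}))$, $\vec{T}(y)=(T_1(y),T_2(y))^T$, finite $A$. Mean value parameters $\vec{w}=\langle\vec{T}(y)\rangle_{p(y;\vec{\eta})}$, assumed invertible with inverse $\vec{\Phi}$. $F(w,v)=\langle y\rangle_{p(y;\vec{\Phi}(w,v))}$, $M_{dh}(\Theta)=F(W_{dh},V_{dh})$ for matrices $W,V\in\mathbb{R}^{D\times H}$ in $\Theta$. For $\vec{s}\in\{0,1\}^H$: $h(d,\vec{s},\Theta)=\mathrm{argmax}_h\{M_{dh}(\Theta)s_h\}$, $\bar{W}_d=W_{d\,h(d,\vec{s},\Theta)}$, $\bar{V}_d=V_{d\,h(d,\vec{s},\Theta)}$, $\vec{\tilde{\eta}}_d(\vec{s},\Theta)=\vec{\Phi}(\bar{W}_d,\bar{V}_d)$.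 Model: $p(\vec{s}\mid\Theta)=\prod_h\pi_h^{s_h}(1-\pi_h)^{1-s_h}$, $p(\vec{y}\mid\vec{s},\Theta)=\prod_d p(y_d;\vec{\tilde{\eta}}_d(\vec{s},\Theta))$. Data $\vec{y}^{(1)},\dots,\vec{y}^{(N)}$, distributions $q^{(n)}$ on $\{0,1\}^H$, lower bound $\mathcal{F}(q,\Theta)=\sum_n\sum_{\vec{s}}q^{(n)}(\vec{s})\{\sum_d\log p(y_d^{(n)};\vec{\tilde{\eta}}_d(\vec{s},\Theta))+\sum_h\log p(s_h\mid\Theta)\}+\mathcal{H}(q)$ with $\mathcal{H}$ the entropy. $\mathcal{A}_{dh}(\vec{s},\Theta)=1$ if $h=h(d,\vec{s},\Theta)$ and $0$ otherwise; $\langle\cdot\rangle_{q^{(n)}}$ is expectation under $q^{(n)}$. *)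

(* Defs.v *)
From HB Require Import structures.
From mathcomp Require Import all_boot all_order all_algebra.
From mathcomp Require Import all_classical all_reals all_analysis.
Import Order.TTheory GRing.Theory Num.Theory.
Import numFieldNormedType.Exports.
Set Implicit Arguments.
Unset Strict Implicit.
Unset Printing Implicit Defensive.
Local Open Scope classical_set_scope.
Local Open Scope ring_scope.

Section ExpFam.
Variable R : realType.
Variable mu : {measure set R -> \bar R}.
Variables (hb T2 : R -> R).

Definition dotT (eta : R * R) (y : R) : R := eta.1 * y + eta.2 * T2 y.

Definition partition (eta : R * R) : \bar R :=
  (\int[mu]_y (hb y * expR (dotT eta y))%:E)%E.

Definition natparam : set (R * R) :=
  [set eta | (0 < partition eta)%E /\ (partition eta < +oo)%E].

Definition logpart (eta : R * R) : R := ln (fine (partition eta)).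

Definition dens (y : R) (eta : R * R) : R :=
  hb y * expR (dotT eta y - logpart eta).

Definition mean_param (eta : R * R) : R * R :=
  (fine (\int[mu]_y (y * dens y eta)%:E)%E,
   fine (\int[mu]_y (T2 y * dens y eta)%:E)%E).

End ExpFam.

Section Model.
Variable R : realType.
Variable mu : {measure set R -> \bar R}.
Variables (hb T2 : R -> R).
Variables (D H N : nat).
(* Phi : inverse of the mean value parametrization, (w, v) |-> eta *)
Variable Phi : R * R -> R * R.

Definition config := {ffun 'I_H -> bool}.

Definition Fmean (w v : R) : R := (mean_param mu hb T2 (Phi (w, v))).1.

Definition Mmat (W V : 'M[R]_(D, H)) (d : 'I_D) (h : 'I_H) : R :=
  Fmean (W d h) (V d h).

(* h(d, s, Theta) = argmax_h { M_dh(Theta) s_h }.  [i0] is only the default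
   required by [arg max]; since the range is all of 'I_H the result does not
   depend on it.  Ties are broken by the library's (fixed) choice. *)
Definition hsel (i0 : 'I_H) (W V : 'M[R]_(D, H)) (d : 'I_D) (s : config) : 'I_H :=
  Order.arg_max i0 xpredT (fun h => Mmat W V d h * (s h)%:R).

Definition Asel (i0 : 'I_H) (W V : 'M[R]_(D, H)) (d : 'I_D) (h : 'I_H)
  (s : config) : R := (hsel i0 W V d s == h)%:R.

Definition Aexp (q : 'I_N -> config -> R) (i0 : 'I_H) (W V : 'M[R]_(D, H))
  (d : 'I_D) (h : 'I_H) (n : 'I_N) : R :=
  \sum_(s : config) q n s * Asel i0 W V d h s.

Definition logprior (pi : 'I_H -> R) (h : 'I_H) (s : config) : R :=
  if s h then ln (pi h) else ln (1 - pi h).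

Definition entropy (q : 'I_N -> config -> R) : R :=
  \sum_(n < N) - \sum_(s : config) q n s * ln (q n s).

(* Lower bound F(q, Theta') in which the selection h(d,s,.) is evaluated at
   Theta0 = (W0, V0) while all parameters are taken from Theta' = (W, V).
   With Theta' = Theta0 this is exactly F(q, Theta). *)
Definition Ffix (Y : 'I_N -> 'I_D -> R) (q : 'I_N -> config -> R)
  (pi : 'I_H -> R) (i0 : 'I_H) (W0 V0 W V : 'M[R]_(D, H)) : R :=
  \sum_(n < N) \sum_(s : config) q n s *
     (\sum_(d < D)
        ln (dens mu hb T2 (Y n d)
              (Phi (W d (hsel i0 W0 V0 d s), V d (hsel i0 W0 V0 d s))))
      + \sum_(h < H) logprior pi h s)
  + entropy q.

Definition Fbound Y q pi i0 (W V : 'M[R]_(D, H)) : R :=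
  Ffix Y q pi i0 W V W V.

Definition upd (W : 'M[R]_(D, H)) (d : 'I_D) (h : 'I_H) (t : R) : 'M[R]_(D, H) :=
  \matrix_(i, j) (if (i == d) && (j == h) then t else W i j).

(* "The derivative of F(q,Theta) w.r.t. W_dh and V_dh vanishes" (the
   argmax-selection A_dh(s,Theta) being held fixed, as in the paper's
   derivation). *)
Definition grad_vanishes Y q pi (W V : 'M[R]_(D, H)) (d : 'I_D) (h : 'I_H) : Prop :=
  is_derive (W d h) (1 : R) (fun t => Ffix Y q pi h W V (upd W d h t) V) 0 /\
  is_derive (V d h) (1 : R) (fun t => Ffix Y q pi h W V W (upd V d h t)) 0.

End Model.

(* Main.v *)
Require Import Defs.
From HB Require Import structures.
From mathcomp Require Import all_boot all_order all_algebra.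
From mathcomp Require Import all_classical all_reals all_analysis.
From mathcomp Require Import ring lra.
Import Order.TTheory GRing.Theory Num.Theory.
Import numFieldNormedType.Exports.
Local Open Scope classical_set_scope.
Local Open Scope ring_scope.

Section Gen.
Variable R : realType.

Lemma is_derive_cvg (f : R -> R) x l :
  (fun h => h^-1 * (f (h + x) - f x)) @ 0^' --> l -> is_derive x 1 f l.
Proof.
move=> H.
have E : (fun h : R => h^-1 *: ((f \o shift x) (h *: 1) - f x)) =
         (fun h => h^-1 * (f (h + x) - f x)).
  by apply: funext => h /=; rewrite /GRing.scale /=; rewrite ?mulr1.
apply: DeriveDef; first by rewrite /derivable E; exact: cvgP H.
by rewrite /derive E; exact: cvg_lim.
Qed.

Lemma is_derive_cvgE (f : R -> R) (x l : R) : is_derive x 1 f l ->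
  (fun h => h^-1 * (f (h + x) - f x)) @ 0^' --> l.
Proof.
move=> [H <-].
have E : (fun h : R => h^-1 *: ((f \o shift x) (h *: 1) - f x)) =
         (fun h => h^-1 * (f (h + x) - f x)).
  by apply: funext => h /=; rewrite /GRing.scale /=; rewrite ?mulr1.
by move: H; rewrite /derivable /derive E.
Qed.

Lemma derive_comp1 (Phi : R * R -> R * R) (w v : R) :
  derivable Phi (w, v) (1, 0) ->
  is_derive w 1 (fun t => (Phi (t, v)).1) ('D_(1, 0) Phi (w, v)).1 /\
  is_derive w 1 (fun t => (Phi (t, v)).2) ('D_(1, 0) Phi (w, v)).2.
Proof.
rewrite /derivable /derive.
set q := (fun h : R => _).
have E h : q h = (h^-1 * ((Phi (h + w, v)).1 - (Phi (w, v)).1),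
                 h^-1 * ((Phi (h + w, v)).2 - (Phi (w, v)).2)).
  rewrite /q /=.
  have -> : (h *: ((1 : R), (0 : R)) + (w, v)) = (h + w, v).
    rewrite /GRing.scale /= /scale_pair /=; apply/pair_equal_spec; split; rewrite /=.
      by rewrite [_%:A]mulr1.
    by rewrite scaler0 add0r.
  by rewrite /GRing.scale /= /scale_pair /=.
move=> H; split; apply: is_derive_cvg.
- have -> : (fun h => h^-1 * ((Phi (h + w, v)).1 - (Phi (w, v)).1)) = fst \o q.
    by apply: funext => h; rewrite /comp E.
  apply: cvg_comp H _. exact: cvg_fst.
- have -> : (fun h => h^-1 * ((Phi (h + w, v)).2 - (Phi (w, v)).2)) = snd \o q.
    by apply: funext => h; rewrite /comp E.
  apply: cvg_comp H _. exact: cvg_snd.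
Qed.

Lemma derive_comp2 (Phi : R * R -> R * R) (w v : R) :
  derivable Phi (w, v) (0, 1) ->
  is_derive v 1 (fun t => (Phi (w, t)).1) ('D_(0, 1) Phi (w, v)).1 /\
  is_derive v 1 (fun t => (Phi (w, t)).2) ('D_(0, 1) Phi (w, v)).2.
Proof.
rewrite /derivable /derive.
set q := (fun h : R => _).
have E h : q h = (h^-1 * ((Phi (w, h + v)).1 - (Phi (w, v)).1),
                 h^-1 * ((Phi (w, h + v)).2 - (Phi (w, v)).2)).
  rewrite /q /=.
  have -> : (h *: ((0 : R), (1 : R)) + (w, v)) = (w, h + v).
    rewrite /GRing.scale /= /scale_pair /=; apply/pair_equal_spec; split; rewrite /=.
      by rewrite scaler0 add0r.
    by rewrite [_%:A]mulr1.
  by rewrite /GRing.scale /= /scale_pair /=.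
move=> H; split; apply: is_derive_cvg.
- have -> : (fun h => h^-1 * ((Phi (w, h + v)).1 - (Phi (w, v)).1)) = fst \o q.
    by apply: funext => h; rewrite /comp E.
  apply: cvg_comp H _. exact: cvg_fst.
- have -> : (fun h => h^-1 * ((Phi (w, h + v)).2 - (Phi (w, v)).2)) = snd \o q.
    by apply: funext => h; rewrite /comp E.
  apply: cvg_comp H _. exact: cvg_snd.
Qed.

Lemma cvg_id0 : (fun h : R => h) @ 0^' --> (0:R).
Proof. by apply/continuous_withinNx; exact: cvg_id. Qed.

Lemma chain_quad (Z : R * R -> R) (c1 c2 : R -> R) (x0 d1 d2 m1 m2 C e : R) :
  0 < e ->
  (forall a b, `|a| <= e -> `|b| <= e ->
     `|Z (c1 x0 + a, c2 x0 + b) - Z (c1 x0, c2 x0) - (a * m1 + b * m2)|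
       <= C * (`|a| + `|b|) ^+ 2) ->
  is_derive x0 1 c1 d1 -> is_derive x0 1 c2 d2 ->
  is_derive x0 1 (fun t => Z (c1 t, c2 t)) (d1 * m1 + d2 * m2).
Proof.
move=> e0 HZ D1 D2; apply: is_derive_cvg.
have Q1 := is_derive_cvgE _ _ _ D1; have Q2 := is_derive_cvgE _ _ _ D2.
set q1 := (fun h => h^-1 * (c1 (h + x0) - c1 x0)) in Q1.
set q2 := (fun h => h^-1 * (c2 (h + x0) - c2 x0)) in Q2.
pose D1h h := c1 (h + x0) - c1 x0.
pose D2h h := c2 (h + x0) - c2 x0.
pose Rm h := Z (c1 (h + x0), c2 (h + x0)) - Z (c1 x0, c2 x0)
   - (D1h h * m1 + D2h h * m2).
have -> : (fun h => h^-1 * (Z (c1 (h + x0), c2 (h + x0)) - Z (c1 x0, c2 x0)))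
   = (fun h => (q1 h * m1 + q2 h * m2) + h^-1 * Rm h).
  by apply: funext => h; rewrite /q1 /q2 /Rm /D1h /D2h; ring.
rewrite -[X in _ --> X]addr0.
apply: cvgD; first by apply: cvgD; apply: cvgMl.
have Deq (c : R -> R) h : c (h + x0) - c x0 = h * (h^-1 * (c (h + x0) - c x0)).
  have [->|hn0] := eqVneq h 0; first by rewrite add0r subrr mul0r.
  by rewrite mulrA mulfV // mul1r.
have hD1 : D1h @ 0^' --> (0:R).
  have -> : D1h = (fun h => h * q1 h) by apply: funext => h; rewrite /D1h Deq.
  by rewrite -[X in _ --> X](mul0r d1); apply: cvgM; [exact: cvg_id0|exact: Q1].
have hD2 : D2h @ 0^' --> (0:R).
  have -> : D2h = (fun h => h * q2 h) by apply: funext => h; rewrite /D2h Deq.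
  by rewrite -[X in _ --> X](mul0r d2); apply: cvgM; [exact: cvg_id0|exact: Q2].
pose B h := C * `|h| * (`|q1 h| + `|q2 h|) ^+ 2.
have HB : B @ 0^' --> (0:R).
  rewrite [X in _ --> X](_ : 0 = C * `|0:R| * (`|d1| + `|d2|) ^+ 2); last by rewrite normr0 mulr0 mul0r.
  apply: cvgM; first apply: cvgMr.
  - exact: cvg_norm cvg_id0.
  - by rewrite expr2; apply: cvgM; apply: cvgD; apply: cvg_norm.
apply/cvgr0Pnorm_le => eps eps0.
near=> h.
have hn0 : h != 0 by near: h; exact: nbhs_dnbhs_neq.
have Ha : `|D1h h| <= e by near: h; exact: ((cvgr0Pnorm_le _).1 hD1 _ e0).
have Hb : `|D2h h| <= e by near: h; exact: ((cvgr0Pnorm_le _).1 hD2 _ e0).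
have HBe : `|B h| <= eps by near: h; exact: ((cvgr0Pnorm_le _).1 HB _ eps0).
apply: le_trans (le_trans (ler_norm _) HBe).
have := HZ _ _ Ha Hb.
have E1 : c1 x0 + D1h h = c1 (h + x0) by rewrite /D1h addrC subrK.
have E2 : c2 x0 + D2h h = c2 (h + x0) by rewrite /D2h addrC subrK.
rewrite E1 E2 -/(Rm h) => HR.
rewrite normrM normfV ler_pdivrMl ?normr_gt0 //.
apply: le_trans HR _.
rewrite /B /q1 /q2 -/(D1h h) -/(D2h h).
rewrite !normrM !normfV.
have hp : 0 < `|h| by rewrite normr_gt0.
rewrite -mulrDr exprMn.
have -> : `|h| * (C * `|h| * ((`|h|)^-1 ^+ 2 * (`|D1h h| + `|D2h h|) ^+ 2)) =
   C * (`|D1h h| + `|D2h h|) ^+ 2 * (`|h| * `|h| * (`|h|)^-1 ^+ 2) by ring.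
by rewrite -expr2 -exprMn mulfV ?gt_eqF // expr1n mulr1.
Unshelve. all: by end_near. Qed.
End Gen.

Section Anal.
Variables (R : realType) (mu : {measure set R -> \bar R}) (hb T2 : R -> R).
Hypotheses (mhb : measurable_fun setT hb) (hb0 : forall y, 0 <= hb y)
  (mT2 : measurable_fun setT T2).

Lemma exp_taylor (x : R) : 0 <= expR x - 1 - x <= x ^+ 2 * expR `|x|.
Proof.
have h1 := expR_ge1Dx x.
have h2 := expR_ge1Dx (- x).
have hE := expR_gt0 x.
have hF := expR_gt0 (- x).
have EF : expR x * expR (- x) = 1 by rewrite -expRD subrr expR0.
apply/andP; split; first lra.
have [x0|x0] := leP 0 x.
  rewrite ger0_norm //.
  have [x1|x1] := leP 1 x; first nra.
  have : expR x * (1 - x) <= 1 by nra.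
  nra.
rewrite ltr0_norm // .
have : expR x * (1 - x) <= 1 by nra.
move=> H.
have : (expR x - 1 - x) * (1 - x) <= x ^+ 2 by nra.
nra.
Qed.

Definition ef (eta : R * R) (y : R) := hb y * expR (dotT T2 eta y).

Lemma ef_ge0 eta y : 0 <= ef eta y.
Proof. by rewrite /ef mulr_ge0 // expR_ge0. Qed.

Lemma mef eta : measurable_fun setT (ef eta).
Proof.
apply: measurable_realfun.measurable_funM => //; apply: measurableT_comp => //.
rewrite /dotT; apply: measurable_realfun.measurable_funD; apply: measurable_realfun.measurable_funM => //.
Qed.

Lemma int_ef eta : natparam mu hb T2 eta -> mu.-integrable setT (EFin \o ef eta).
Proof.
move=> [_ fin]; apply/integrableP; split; first by apply/measurable_realfun.measurable_EFinP; exact: mef.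
have -> : (\int[mu]_x `|(EFin \o ef eta) x|)%E = Defs.partition mu hb T2 eta.
  by apply: eq_integral => y _; rewrite /= ger0_norm // ef_ge0.
exact: fin.
Qed.

Lemma intRD (f g : R -> R) : mu.-integrable setT (EFin \o f) ->
  mu.-integrable setT (EFin \o g) -> mu.-integrable setT (EFin \o (fun y => f y + g y)).
Proof. by move=> If Ig; apply: eq_integrable (integrableD _ If Ig). Qed.

Lemma intRB (f g : R -> R) : mu.-integrable setT (EFin \o f) ->
  mu.-integrable setT (EFin \o g) -> mu.-integrable setT (EFin \o (fun y => f y - g y)).
Proof. by move=> If Ig; apply: eq_integrable (integrableB _ If Ig). Qed.

Lemma intRZl (f : R -> R) k : mu.-integrable setT (EFin \o f) ->
  mu.-integrable setT (EFin \o (fun y => k * f y)).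
Proof. by move=> If; apply: eq_integrable (integrableZl _ k If). Qed.

Lemma efE p1 p2 a b y :
  ef (p1 + a, p2 + b) y = ef (p1, p2) y * expR (a * y + b * T2 y).
Proof. by rewrite /ef /dotT /= -mulrA -expRD; congr (_ * expR _); ring. Qed.


Lemma expR_abs_le (c y : R) : 0 <= c -> expR (c * `|y|) <= expR (c * y) + expR (- (c * y)).
Proof.
move=> c0; have [hy|hy] := leP 0 y.
  by rewrite ger0_norm //; have := expR_ge0 (- (c * y)); lra.
by rewrite ltr0_norm // mulrN; have := expR_ge0 (c * y); lra.
Qed.

Section Corners.
Variables (p1 p2 e : R).
Hypothesis e0 : 0 < e.

Definition Ec y := ef (p1 + e, p2 + e) y + ef (p1 + e, p2 - e) y +
  ef (p1 - e, p2 + e) y + ef (p1 - e, p2 - e) y.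

Lemma Ec_bound y : ef (p1, p2) y * expR (e * (`|y| + `|T2 y|)) <= Ec y.
Proof.
rewrite /Ec !efE -!mulrDr; apply: ler_wpM2l; first exact: ef_ge0.
rewrite [in X in X <= _]mulrDr [in X in X <= _]expRD.
have h1 := expR_abs_le e y (ltW e0).
have h2 := expR_abs_le e (T2 y) (ltW e0).
apply: le_trans (ler_pM (expR_ge0 _) (expR_ge0 _) h1 h2) _.
rewrite !mulrDr !expRD !mulNr !expRN.
by rewrite le_eqVlt; apply/orP; left; apply/eqP; ring.
Qed.

Lemma ef_le_Ec a b y : `|a| <= e -> `|b| <= e -> ef (p1 + a, p2 + b) y <= Ec y.
Proof.
move=> ha hb2; rewrite efE; apply: le_trans (Ec_bound y).
apply: ler_wpM2l; first exact: ef_ge0.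
rewrite ler_expR.
have h1 : a * y <= e * `|y|.
  apply: le_trans (ler_norm _) _; rewrite normrM.
  exact: ler_wpM2r.
have h2 : b * T2 y <= e * `|T2 y|.
  apply: le_trans (ler_norm _) _; rewrite normrM.
  exact: ler_wpM2r.
lra.
Qed.

Lemma mul_le_Ec z y : `|z| <= `|y| + `|T2 y| ->
  `|z * ef (p1, p2) y| <= e^-1 * Ec y.
Proof.
move=> hz; rewrite normrM (ger0_norm (ef_ge0 _ _)).
have h1 := expR_ge1Dx (e * (`|y| + `|T2 y|)).
have h2 : e * `|z| <= expR (e * (`|y| + `|T2 y|)).
  have : e * `|z| <= e * (`|y| + `|T2 y|) by apply: ler_wpM2l => //; exact: ltW.
  lra.
have h3 : `|z| <= e^-1 * expR (e * (`|y| + `|T2 y|)).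
  apply: le_trans _ (ler_wpM2l _ h2); last by rewrite invr_ge0 ltW.
  by rewrite mulrA mulVf ?gt_eqF // mul1r.
apply: le_trans (ler_wpM2r (ef_ge0 _ _) h3) _.
rewrite -mulrA; apply: ler_wpM2l; first by rewrite invr_ge0 ltW.
by rewrite mulrC; exact: Ec_bound.
Qed.

Lemma taylor_pt a b y : `|a| <= e / 2 -> `|b| <= e / 2 ->
  `|ef (p1 + a, p2 + b) y - ef (p1, p2) y
     - (a * (y * ef (p1, p2) y) + b * (T2 y * ef (p1, p2) y))|
   <= 8 / e ^+ 2 * (`|a| + `|b|) ^+ 2 * Ec y.
Proof.
move=> ha hb2; rewrite efE.
set E0 := ef (p1, p2) y.
set x := a * y + b * T2 y.
set s := `|y| + `|T2 y|.
have -> : E0 * expR x - E0 - (a * (y * E0) + b * (T2 y * E0)) =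
  E0 * (expR x - 1 - x) by rewrite /x; ring.
have [T0 T1] := andP (exp_taylor x).
rewrite normrM (ger0_norm (ef_ge0 _ _)) (ger0_norm T0).
have s0 : 0 <= s by rewrite /s addr_ge0.
have hx : `|x| <= `|a| * `|y| + `|b| * `|T2 y|.
  by apply: le_trans (ler_normD _ _) _; rewrite !normrM.
have hx1 : `|x| <= (`|a| + `|b|) * s.
  apply: le_trans hx _; rewrite /s.
  have := normr_ge0 a; have := normr_ge0 b; have := normr_ge0 y;
  have := normr_ge0 (T2 y); nra.
have hx2 : `|x| <= e / 2 * s.
  apply: le_trans hx _; rewrite /s.
  have := normr_ge0 a; have := normr_ge0 b; have := normr_ge0 y;
  have := normr_ge0 (T2 y); nra.
set P := expR (e / 2 * s).
have P0 : 0 <= P by exact: expR_ge0.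
have hP : expR `|x| <= P by rewrite ler_expR.
have e2 : 0 < e ^+ 2 by exact: exprn_gt0.
have hs : s ^+ 2 <= 8 / e ^+ 2 * P.
  have H := @expR_ge1Dxn _ (e / 2 * s) 1 (mulr_ge0 (divr_ge0 (ltW e0) (ler0n _ 2)) s0).
  rewrite -/P (_ : (2`!)%N = 2%N) // in H.
  have H8 : e ^+ 2 * s ^+ 2 <= 8 * P.
    have -> : e ^+ 2 * s ^+ 2 = 8 * ((e / 2 * s) ^+ 2 / 2%:R) by field.
    lra.
  have -> : 8 / e ^+ 2 * P = (e ^+ 2)^-1 * (8 * P) by ring.
  apply: le_trans _ (ler_wpM2l _ H8); last by rewrite invr_ge0 ltW.
  by rewrite mulrA mulVf ?gt_eqF // mul1r.
set K := (`|a| + `|b|) ^+ 2.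
have K0 : 0 <= K by rewrite /K sqr_ge0.
have hx3 : x ^+ 2 <= K * s ^+ 2.
  rewrite -real_normK ?num_real // /K -exprMn.
  have := normr_ge0 x; nra.
have PP : P * P = expR (e * s) by rewrite -expRD -mulrDl -splitr.
have hT : expR x - 1 - x <= 8 / e ^+ 2 * K * expR (e * s).
  have i1 : x ^+ 2 * expR `|x| <= x ^+ 2 * P := ler_wpM2l (sqr_ge0 x) hP.
  have i2 : x ^+ 2 * P <= K * s ^+ 2 * P := ler_wpM2r P0 hx3.
  have i3 : K * s ^+ 2 * P <= K * (8 / e ^+ 2 * P) * P :=
    ler_wpM2r P0 (ler_wpM2l K0 hs).
  rewrite -PP.
  have : K * (8 / e ^+ 2 * P) * P = 8 / e ^+ 2 * K * (P * P) by ring.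
  lra.
apply: le_trans (ler_wpM2l (ef_ge0 _ _) hT) _.
rewrite mulrCA; apply: ler_wpM2l.
  by apply: mulr_ge0 => //; apply: divr_ge0 => //; exact: ltW.
exact: Ec_bound.
Qed.

Hypotheses (np0 : natparam mu hb T2 (p1, p2))
  (npc1 : natparam mu hb T2 (p1 + e, p2 + e))
  (npc2 : natparam mu hb T2 (p1 + e, p2 - e))
  (npc3 : natparam mu hb T2 (p1 - e, p2 + e))
  (npc4 : natparam mu hb T2 (p1 - e, p2 - e)).

Lemma int_Ec : mu.-integrable setT (EFin \o Ec).
Proof.
by apply: intRD; [apply: intRD; [apply: intRD|]|]; apply: int_ef.
Qed.

Lemma mEc : measurable_fun setT Ec.
Proof.
by apply: measurable_realfun.measurable_funD; [apply: measurable_realfun.measurable_funD; [apply: measurable_realfun.measurable_funD|]|]; apply: mef.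
Qed.

Lemma Ec_ge0 y : 0 <= Ec y.
Proof. by rewrite /Ec !addr_ge0 // ef_ge0. Qed.

Lemma int_efab a b : `|a| <= e -> `|b| <= e ->
  mu.-integrable setT (EFin \o ef (p1 + a, p2 + b)).
Proof.
move=> ha hb2; apply: le_integrable int_Ec => //.
  by apply/measurable_realfun.measurable_EFinP; exact: mef.
move=> y _ /=; rewrite lee_fin ger0_norm ?ef_ge0 // ger0_norm ?Ec_ge0 //.
exact: ef_le_Ec.
Qed.

Lemma int_mul (z : R -> R) : measurable_fun setT z ->
  (forall y, `|z y| <= `|y| + `|T2 y|) ->
  mu.-integrable setT (EFin \o (fun y => z y * ef (p1, p2) y)).
Proof.
move=> mz hz; apply: le_integrable (intRZl _ e^-1 int_Ec) => //.
  apply/measurable_realfun.measurable_EFinP.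
  by apply: measurable_realfun.measurable_funM => //; exact: mef.
move=> y _ /=; rewrite lee_fin.
rewrite [X in _ <= X]ger0_norm; first exact: mul_le_Ec.
by rewrite mulr_ge0 ?Ec_ge0 // invr_ge0 ltW.
Qed.

Lemma int_y : mu.-integrable setT (EFin \o (fun y => y * ef (p1, p2) y)).
Proof. by apply: int_mul => // y; rewrite lerDl. Qed.

Lemma int_T2 : mu.-integrable setT (EFin \o (fun y => T2 y * ef (p1, p2) y)).
Proof. by apply: int_mul => // y; rewrite lerDr. Qed.

Definition Zr (eta : R * R) := \int[mu]_y ef eta y.
Definition m1 := \int[mu]_y (y * ef (p1, p2) y).
Definition m2 := \int[mu]_y (T2 y * ef (p1, p2) y).

Lemma Zquad a b : `|a| <= e / 2 -> `|b| <= e / 2 ->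
  `|Zr (p1 + a, p2 + b) - Zr (p1, p2) - (a * m1 + b * m2)|
    <= 8 / e ^+ 2 * \int[mu]_y Ec y * (`|a| + `|b|) ^+ 2.
Proof.
move=> ha hb2.
have he : e / 2 <= e by rewrite ler_pdivrMr // ler_peMr // ?ler1n // ltW.
have iab := int_efab _ _ (le_trans ha he) (le_trans hb2 he).
have i0 := int_ef _ np0.
have iy := intRZl _ a int_y.
have iT := intRZl _ b int_T2.
have iD := intRD _ _ iy iT.
have iB1 := intRB _ _ iab i0.
have iB := intRB _ _ iB1 iD.
have E : \int[mu]_y (ef (p1 + a, p2 + b) y - ef (p1, p2) y
     - (a * (y * ef (p1, p2) y) + b * (T2 y * ef (p1, p2) y)))
   = Zr (p1 + a, p2 + b) - Zr (p1, p2) - (a * m1 + b * m2).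
  rewrite RintegralB // RintegralB // RintegralD //.
  by rewrite !RintegralZl // ; [exact: int_T2 | exact: int_y].
rewrite -E.
apply: le_trans (le_normr_Rintegral _ _) _ => //.
have iK := intRZl _ (8 / e ^+ 2 * (`|a| + `|b|) ^+ 2) int_Ec.
apply: le_trans (le_Rintegral _ (integrable_norm iB) iK _) _ => //.
  by move=> y _; exact: taylor_pt.
rewrite RintegralZl; [|by []|exact: int_Ec]. by rewrite le_eqVlt; apply/orP; left; apply/eqP; ring.
Qed.

Lemma Zr_gt0 : 0 < Zr (p1, p2).
Proof. by case: np0 => h1 h2; apply: fine_gt0; rewrite h1 h2. Qed.

Lemma mean_rel : mean_param mu hb T2 (p1, p2) = (m1 / Zr (p1, p2), m2 / Zr (p1, p2)).
Proof.
have Z0 := Zr_gt0.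
have dE y : dens mu hb T2 y (p1, p2) = ef (p1, p2) y * (Zr (p1, p2))^-1.
  rewrite /dens /logpart expRD expRN lnK ?posrE //.
  by rewrite mulrA.
rewrite /mean_param; congr pair.
  have -> : fine (\int[mu]_y (y * dens mu hb T2 y (p1, p2))%:E)%E
     = \int[mu]_y (y * dens mu hb T2 y (p1, p2)) by [].
  under eq_Rintegral do rewrite dE mulrA.
  by rewrite RintegralZr //; exact: int_y.
have -> : fine (\int[mu]_y (T2 y * dens mu hb T2 y (p1, p2))%:E)%E
   = \int[mu]_y (T2 y * dens mu hb T2 y (p1, p2)) by [].
under eq_Rintegral do rewrite dE mulrA.
by rewrite RintegralZr //; exact: int_T2.
Qed.

End Corners.
End Anal.

Lemma alg_step (R : realType) (x S S' B A G : R) :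
  S' = S + A * G -> x * (S' + B) = x * (S + B) + x * A * G.
Proof. by move=> ->; ring. Qed.

Lemma Ffix_decomp (R : realType) (mu : {measure set R -> \bar R})
  (hb T2 : R -> R) (D H N : nat) (Phi : R * R -> R * R)
  (pi : 'I_H -> R) (W V W' V' : 'M[R]_(D, H))
  (Y : 'I_N -> 'I_D -> R) (q : 'I_N -> config H -> R)
  (d : 'I_D) (h : 'I_H) (G : 'I_N -> R) :
  (forall i j, (i != d) || (j != h) -> W' i j = W i j /\ V' i j = V i j) ->
  (forall n, ln (dens mu hb T2 (Y n d) (Phi (W' d h, V' d h)))
           - ln (dens mu hb T2 (Y n d) (Phi (W d h, V d h))) = G n) ->
  Ffix mu hb T2 Phi Y q pi h W V W' V' =
  Ffix mu hb T2 Phi Y q pi h W V W V +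
  \sum_(n < N) Aexp mu hb T2 Phi q h W V d h n * G n.
Proof.
move=> Hagree HG.
rewrite /Ffix [RHS]addrAC; congr (_ + _); rewrite -big_split.
apply: eq_bigr => n _.
rewrite /Aexp mulr_suml -big_split; apply: eq_bigr => s _.
set k := fun i => hsel mu hb T2 Phi h W V i s.
have Hd : forall i, ln (dens mu hb T2 (Y n i) (Phi (W' i (k i), V' i (k i)))) =
   ln (dens mu hb T2 (Y n i) (Phi (W i (k i), V i (k i)))) +
   ((i == d) && (k i == h))%:R * G n.
  move=> i; have [/andP[/eqP -> /eqP kh]|nE] := boolP ((i == d) && (k i == h)).
    by rewrite kh mul1r -(HG n) addrC subrK.
  have [-> ->] := Hagree i (k i) ltac:(by rewrite -negb_and).
  by rewrite mul0r addr0.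
have E : \sum_(d0 < D) ln (dens mu hb T2 (Y n d0) (Phi (W' d0 (hsel mu hb T2 Phi h W V d0 s), V' d0 (hsel mu hb T2 Phi h W V d0 s))))
  = \sum_(d0 < D) ln (dens mu hb T2 (Y n d0) (Phi (W d0 (hsel mu hb T2 Phi h W V d0 s), V d0 (hsel mu hb T2 Phi h W V d0 s))))
    + Asel mu hb T2 Phi h W V d h s * G n.
  rewrite [X in _ = _ + X](_ : _ = \sum_(d0 < D) ((d0 == d) && (k d0 == h))%:R * G n); last first.
    rewrite (bigD1 d) // eqxx andTb big1; first by rewrite -[RHS]/(_ + 0) addr0.
    by move=> i /negbTE ->; rewrite andFb mul0r.
  rewrite -big_split. apply: eq_bigr => i _. exact: (Hd i).
exact: alg_step E.
Qed.

Lemma interior_corners (R : realType) (A : set (R * R)) (p : R * R) :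
  interior A p -> exists e : R, 0 < e /\
    forall a b, `|a| <= e -> `|b| <= e -> A (p.1 + a, p.2 + b).
Proof.
move=> /nbhs_ballP [r r0 Hr].
exists (r / 2); split; first by rewrite divr_gt0.
move=> a b ha hb; apply: Hr; split => /=.
  rewrite -ball_normE /ball_ /= opprD addrA subrr add0r normrN.
  by apply: le_lt_trans ha _; rewrite ltr_pdivrMr // ltr_pMr // ltr1n.
rewrite -ball_normE /ball_ /= opprD addrA subrr add0r normrN.
by apply: le_lt_trans hb _; rewrite ltr_pdivrMr // ltr_pMr // ltr1n.
Qed.

Lemma is_derive_lin (R : realType) (N : nat) (K x : R) (c : 'I_N -> R)
  (f : 'I_N -> R -> R) (df : 'I_N -> R) :
  (forall i, is_derive x 1 (f i) (df i)) ->
  is_derive x 1 (fun t => K + \sum_(i < N) c i * f i t) (\sum_(i < N) c i * df i).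
Proof.
move=> Hf.
have H : is_derive x 1 (cst K + \sum_(i < N) (c i \*: f i))
   (0 + \sum_(i < N) c i *: df i).
  exact: (is_deriveD (is_derive_cst K x 1) (is_derive_sum (fun i => is_deriveZ (c i) (Hf i)))).
rewrite add0r in H.
have E : cst K + \sum_(i < N) (c i \*: f i) = (fun t => K + \sum_(i < N) c i * f i t).
  apply: funext => t /=; congr (_ + _).
  by rewrite fct_sumE.
by rewrite -E.
Qed.

Lemma det_lemma (R : realType) (A B C D g1 g2 : R) : A * D - C * B != 0 ->
  (A * g1 + B * g2 = 0 /\ C * g1 + D * g2 = 0) <-> (g1 = 0 /\ g2 = 0).
Proof.
move=> hdet; split; last by case=> -> ->; rewrite !mulr0 addr0.
case=> h1 h2; split.
  apply: (mulIf hdet); rewrite mul0r.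
  have -> : g1 * (A * D - C * B) = D * (A * g1 + B * g2) - B * (C * g1 + D * g2) by ring.
  by rewrite h1 h2 !mulr0 subr0.
apply: (mulIf hdet); rewrite mul0r.
have -> : g2 * (A * D - C * B) = A * (C * g1 + D * g2) - C * (A * g1 + B * g2) by ring.
by rewrite h1 h2 !mulr0 subr0.
Qed.

Lemma ln_dens (R : realType) (mu : {measure set R -> \bar R}) (hb T2 : R -> R) y eta :
  0 < hb y -> ln (dens mu hb T2 y eta) = ln (hb y) + (dotT T2 eta y - logpart mu hb T2 eta).
Proof.
by move=> hy; rewrite /dens lnM ?posrE ?expR_gt0 // expRK.
Qed.

Lemma isdB' (R : realType) (f g : R -> R) (x df dg : R) :
  is_derive x 1 f df -> is_derive x 1 g dg ->
  is_derive x 1 (fun t => f t - g t) (df - dg).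
Proof. by move=> H1 H2; exact: (is_deriveB H1 H2). Qed.

Lemma isdD' (R : realType) (f g : R -> R) (x df dg : R) :
  is_derive x 1 f df -> is_derive x 1 g dg ->
  is_derive x 1 (fun t => f t + g t) (df + dg).
Proof. by move=> H1 H2; exact: (is_deriveD H1 H2). Qed.

Lemma isdMc (R : realType) (f : R -> R) (x df k : R) :
  is_derive x 1 f df -> is_derive x 1 (fun t => f t * k) (df * k).
Proof.
move=> H; have H' := is_deriveZ k H.
have E : k \*: f = (fun t => f t * k) by apply: funext => t; rewrite /= mulrC.
by rewrite -E mulrC.
Qed.

Lemma isd_zero (R : realType) (f : R -> R) (x D : R) :
  is_derive x 1 f D -> (is_derive x 1 f 0 <-> D = 0).
Proof.
move=> H; split; last by move=> <-.
move=> H0; have e1 := @derive_val _ _ _ _ _ _ _ H; have e2 := @derive_val _ _ _ _ _ _ _ H0.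
by rewrite -e1 e2.
Qed.

Lemma sum_lin (R : realType) (N : nat) (a Y T : 'I_N -> R) (A B w v : R) :
  \sum_(n < N) a n * (A * (Y n - w) + B * (T n - v)) =
  A * ((\sum_(n < N) a n * Y n) - w * (\sum_(n < N) a n)) +
  B * ((\sum_(n < N) a n * T n) - v * (\sum_(n < N) a n)).
Proof.
have -> : A * ((\sum_(n < N) a n * Y n) - w * (\sum_(n < N) a n)) +
  B * ((\sum_(n < N) a n * T n) - v * (\sum_(n < N) a n)) =
  (A * (\sum_(n < N) a n * Y n) - (A * w) * (\sum_(n < N) a n)) +
  (B * (\sum_(n < N) a n * T n) - (B * v) * (\sum_(n < N) a n)) by ring.
rewrite !big_distrr -!sumrB -big_split; apply: eq_bigr => n _ /=; ring.
Qed.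

Lemma div_iff (R : realType) (X S w : R) : S != 0 -> (X - w * S = 0 <-> w = X / S).
Proof.
move=> hS; split.
  by move/eqP; rewrite subr_eq0 => /eqP ->; rewrite mulfK.
by move=> ->; rewrite divfK // subrr.
Qed.

Lemma ln_dens_diff (R : realType) (mu : {measure set R -> \bar R}) (hb T2 : R -> R) y e1 e2 :
  0 < hb y -> ln (dens mu hb T2 y e1) - ln (dens mu hb T2 y e2) =
  (dotT T2 e1 y - logpart mu hb T2 e1) - (dotT T2 e2 y - logpart mu hb T2 e2).
Proof.
move=> hy.
have K (x1 x2 c X1 X2 : R) : x1 = c + X1 -> x2 = c + X2 -> x1 - x2 = X1 - X2.
  by move=> -> ->; ring.
exact: (K _ _ _ _ _ (ln_dens _ mu hb T2 y e1 hy) (ln_dens _ mu hb T2 y e2 hy)).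
Qed.

Lemma addKB (R : realType) (c x y : R) : (c + x) - (c + y) = x - y.
Proof. by ring. Qed.

Theorem corollary1 (R : realType) (mu : {measure set R -> \bar R})
  (hb T2 : R -> R) (D H N : nat) (Phi : R * R -> R * R)
  (pi : 'I_H -> R) (W V : 'M[R]_(D, H))
  (Y : 'I_N -> 'I_D -> R) (q : 'I_N -> config H -> R)
  (d : 'I_D) (h : 'I_H) :
  (* exponential family *)
  measurable_fun setT hb -> (forall y, 0 <= hb y) -> measurable_fun setT T2 ->
  (* Phi is the inverse of the mean value parametrization *)
  (forall eta, natparam mu hb T2 eta -> Phi (mean_param mu hb T2 eta) = eta) ->
  (forall wv, (mean_param mu hb T2 @` natparam mu hb T2) wv ->
     natparam mu hb T2 (Phi wv) /\ mean_param mu hb T2 (Phi wv) = wv) ->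
  (* model: prior, variational distributions, data *)
  (forall h', 0 < pi h' < 1) ->
  (forall n, (forall s, 0 <= q n s) /\ \sum_(s : config H) q n s = 1) ->
  (forall n d', 0 < hb (Y n d')) ->
  (* regularity at (W_dh, V_dh) *)
  (mean_param mu hb T2 @` natparam mu hb T2) (W d h, V d h) ->
  interior (natparam mu hb T2) (Phi (W d h, V d h)) ->
  derivable Phi (W d h, V d h) (1, 0) ->
  derivable Phi (W d h, V d h) (0, 1) ->
  let J1 := 'D_(1, 0) Phi (W d h, V d h) in
  let J2 := 'D_(0, 1) Phi (W d h, V d h) in
  J1.1 * J2.2 - J2.1 * J1.2 != 0 ->
  let a := fun n : 'I_N => Aexp mu hb T2 Phi q h W V d h n in
  \sum_(n < N) a n != 0 ->
  grad_vanishes mu hb T2 Phi Y q pi W V d h <->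
  (W d h = (\sum_(n < N) a n * Y n d)
             / (\sum_(n < N) a n) /\
   V d h = (\sum_(n < N) a n * T2 (Y n d))
             / (\sum_(n < N) a n)).
Proof.
move=> mhb hb0 mT2 Hinv1 Hinv2 hpi hq hY Himg Hint dP1 dP2 J1 J2 hdet a hS.
have [np0 mp0] := Hinv2 _ Himg.
have [e [e0 He]] := interior_corners _ _ _ Hint.
have [dc1 dc2] := derive_comp1 _ _ _ _ dP1.
have [dd1 dd2] := derive_comp2 _ _ _ _ dP2.
move: np0 mp0 He.
case E0 : (Phi (W d h, V d h)) => [p1 p2] /= np0 mp0 He.
have hee : `|e| <= e by rewrite ger0_norm // ltW.
have heN : `|- e| <= e by rewrite normrN.
have c1 := He _ _ hee hee.
have c2 := He _ _ hee heN.
have c3 := He _ _ heN hee.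
have c4 := He _ _ heN heN.
have ZQ := Zquad _ _ _ _ mhb hb0 mT2 _ _ _ e0 np0 c1 c2 c3 c4.
have MR := mean_rel _ _ _ _ mhb hb0 mT2 _ _ _ e0 np0 c1 c2 c3 c4.
have Z0 := Zr_gt0 _ _ _ _ _ _ np0.
rewrite MR in mp0.
case: mp0 => Ew Ev.
set Zr0 := Zr R mu hb T2 (p1, p2) in Z0 Ew Ev ZQ.
set M1 := m1 R mu hb T2 p1 p2 in Ew ZQ.
set M2 := m2 R mu hb T2 p1 p2 in Ev ZQ.
set C := 8 / e ^+ 2 * _ in ZQ.
have e20 : 0 < e / 2 by rewrite divr_gt0.
have HZ : forall a b, `|a| <= e / 2 -> `|b| <= e / 2 ->
   `|Zr R mu hb T2 ((Phi (W d h, V d h)).1 + a, (Phi (W d h, V d h)).2 + b)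
     - Zr R mu hb T2 ((Phi (W d h, V d h)).1, (Phi (W d h, V d h)).2)
     - (a * M1 + b * M2)| <= C * (`|a| + `|b|) ^+ 2.
  by rewrite E0 /=; exact: ZQ.
have kW : is_derive (W d h) 1 (fun t => Zr R mu hb T2 (Phi (t, V d h)))
    (J1.1 * M1 + J1.2 * M2).
  have K := @chain_quad R (Zr R mu hb T2) (fun t => (Phi (t, V d h)).1)
    (fun t => (Phi (t, V d h)).2) (W d h) J1.1 J1.2 M1 M2 C (e / 2) e20 HZ dc1 dc2.
  have -> : (fun t => Zr R mu hb T2 (Phi (t, V d h))) =
    (fun t => Zr R mu hb T2 ((Phi (t, V d h)).1, (Phi (t, V d h)).2)).
    by apply: funext => t; case: (Phi (t, V d h)).
  exact: K.
have kV : is_derive (V d h) 1 (fun t => Zr R mu hb T2 (Phi (W d h, t)))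
    (J2.1 * M1 + J2.2 * M2).
  have K := @chain_quad R (Zr R mu hb T2) (fun t => (Phi (W d h, t)).1)
    (fun t => (Phi (W d h, t)).2) (V d h) J2.1 J2.2 M1 M2 C (e / 2) e20 HZ dd1 dd2.
  have -> : (fun t => Zr R mu hb T2 (Phi (W d h, t))) =
    (fun t => Zr R mu hb T2 ((Phi (W d h, t)).1, (Phi (W d h, t)).2)).
    by apply: funext => t; case: (Phi (W d h, t)).
  exact: K.
have Zpos : 0 < Zr R mu hb T2 (Phi (W d h, V d h)) by rewrite E0.
have lW : is_derive (W d h) 1 (fun t => logpart mu hb T2 (Phi (t, V d h)))
    (Zr0^-1 * (J1.1 * M1 + J1.2 * M2)).
  have K := is_derive1_comp (is_derive1_ln Zpos) kW.
  rewrite E0 in K; exact: K.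
have lV : is_derive (V d h) 1 (fun t => logpart mu hb T2 (Phi (W d h, t)))
    (Zr0^-1 * (J2.1 * M1 + J2.2 * M2)).
  have K := is_derive1_comp (is_derive1_ln Zpos) kV.
  rewrite E0 in K; exact: K.
pose GW (n : 'I_N) t := dotT T2 (Phi (t, V d h)) (Y n d) - logpart mu hb T2 (Phi (t, V d h)).
pose GV (n : 'I_N) t := dotT T2 (Phi (W d h, t)) (Y n d) - logpart mu hb T2 (Phi (W d h, t)).
pose DGW (n : 'I_N) := J1.1 * Y n d + J1.2 * T2 (Y n d) - Zr0^-1 * (J1.1 * M1 + J1.2 * M2).
pose DGV (n : 'I_N) := J2.1 * Y n d + J2.2 * T2 (Y n d) - Zr0^-1 * (J2.1 * M1 + J2.2 * M2).
have dGW : forall n, is_derive (W d h) 1 (fun t => GW n t - GW n (W d h)) (DGW n).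
  move=> n.
  have h1 := isdMc R _ _ _ (Y n d) dc1.
  have h2 := isdMc R _ _ _ (T2 (Y n d)) dc2.
  have h3 := isdD' R _ _ _ _ _ h1 h2.
  have h4 := isdB' R _ _ _ _ _ h3 lW.
  have h5 := isdB' R _ _ _ _ _ h4 (is_derive_cst (GW n (W d h)) (W d h) 1).
  by rewrite subr0 in h5.
have dGV : forall n, is_derive (V d h) 1 (fun t => GV n t - GV n (V d h)) (DGV n).
  move=> n.
  have h1 := isdMc R _ _ _ (Y n d) dd1.
  have h2 := isdMc R _ _ _ (T2 (Y n d)) dd2.
  have h3 := isdD' R _ _ _ _ _ h1 h2.
  have h4 := isdB' R _ _ _ _ _ h3 lV.
  have h5 := isdB' R _ _ _ _ _ h4 (is_derive_cst (GV n (V d h)) (V d h) 1).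
  by rewrite subr0 in h5.
have FW : is_derive (W d h) 1
    (fun t => Ffix mu hb T2 Phi Y q pi h W V (upd W d h t) V)
    (\sum_(n < N) Aexp mu hb T2 Phi q h W V d h n * DGW n).
  have E : (fun t => Ffix mu hb T2 Phi Y q pi h W V (upd W d h t) V) =
     (fun t => Ffix mu hb T2 Phi Y q pi h W V W V +
        \sum_(n < N) Aexp mu hb T2 Phi q h W V d h n * (GW n t - GW n (W d h))).
    apply: funext => t.
    apply: (@Ffix_decomp R mu hb T2 D H N Phi pi W V (upd W d h t) V Y q d h
       (fun n => GW n t - GW n (W d h))).
      move=> i j hij; split => //; rewrite /upd mxE.
      case: ifP => // /andP[/eqP ei /eqP ej].
      by move: hij; rewrite ei ej !eqxx.
    move=> n; rewrite /upd mxE !eqxx /=.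
    exact: (ln_dens_diff _ _ _ _ _ _ _ (hY n d)).
  rewrite E.
  exact: (@is_derive_lin R N _ (W d h) (fun n => Aexp mu hb T2 Phi q h W V d h n)
     (fun n t => GW n t - GW n (W d h)) DGW dGW).
have FV : is_derive (V d h) 1
    (fun t => Ffix mu hb T2 Phi Y q pi h W V W (upd V d h t))
    (\sum_(n < N) Aexp mu hb T2 Phi q h W V d h n * DGV n).
  have E : (fun t => Ffix mu hb T2 Phi Y q pi h W V W (upd V d h t)) =
     (fun t => Ffix mu hb T2 Phi Y q pi h W V W V +
        \sum_(n < N) Aexp mu hb T2 Phi q h W V d h n * (GV n t - GV n (V d h))).
    apply: funext => t.
    apply: (@Ffix_decomp R mu hb T2 D H N Phi pi W V W (upd V d h t) Y q d h
       (fun n => GV n t - GV n (V d h))).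
      move=> i j hij; split => //; rewrite /upd mxE.
      case: ifP => // /andP[/eqP ei /eqP ej].
      by move: hij; rewrite ei ej !eqxx.
    move=> n; rewrite /upd mxE !eqxx /=.
    exact: (ln_dens_diff _ _ _ _ _ _ _ (hY n d)).
  rewrite E.
  exact: (@is_derive_lin R N _ (V d h) (fun n => Aexp mu hb T2 Phi q h W V d h n)
     (fun n t => GV n t - GV n (V d h)) DGV dGV).
have DWE : \sum_(n < N) Aexp mu hb T2 Phi q h W V d h n * DGW n =
   J1.1 * ((\sum_(n < N) a n * Y n d) - W d h * (\sum_(n < N) a n)) +
   J1.2 * ((\sum_(n < N) a n * T2 (Y n d)) - V d h * (\sum_(n < N) a n)).
  apply: etrans _ (sum_lin R N a (fun n => Y n d) (fun n => T2 (Y n d)) J1.1 J1.2 (W d h) (V d h)).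
  apply: eq_bigr => n _; rewrite /DGW -Ew -Ev /a; ring.
have DVE : \sum_(n < N) Aexp mu hb T2 Phi q h W V d h n * DGV n =
   J2.1 * ((\sum_(n < N) a n * Y n d) - W d h * (\sum_(n < N) a n)) +
   J2.2 * ((\sum_(n < N) a n * T2 (Y n d)) - V d h * (\sum_(n < N) a n)).
  apply: etrans _ (sum_lin R N a (fun n => Y n d) (fun n => T2 (Y n d)) J2.1 J2.2 (W d h) (V d h)).
  apply: eq_bigr => n _; rewrite /DGV -Ew -Ev /a; ring.
have L1 := isd_zero _ _ _ _ FW.
have L2 := isd_zero _ _ _ _ FV.
rewrite DWE in L1; rewrite DVE in L2.
have Hdet := det_lemma R J1.1 J1.2 J2.1 J2.2
  ((\sum_(n < N) a n * Y n d) - W d h * (\sum_(n < N) a n))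
  ((\sum_(n < N) a n * T2 (Y n d)) - V d h * (\sum_(n < N) a n)) hdet.
have Dw := div_iff R (\sum_(n < N) a n * Y n d) (\sum_(n < N) a n) (W d h) hS.
have Dv := div_iff R (\sum_(n < N) a n * T2 (Y n d)) (\sum_(n < N) a n) (V d h) hS.
rewrite /grad_vanishes; split.
  case=> H1 H2.
  have [g10 g20] := Hdet.1 (conj (L1.1 H1) (L2.1 H2)).
  by split; [exact: Dw.1 | exact: Dv.1].
case=> hw hv.
have g10 := Dw.2 hw; have g20 := Dv.2 hv.
by split; [apply: L1.2 | apply: L2.2]; rewrite g10 g20 !mulr0 addr0.
Qed.
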